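(* Let $n\ge2$ and $f\in\mathbf{SB}_n$ with $\mathcal{AI}(f)=\lceil n/2\rceil$. Then $\deg(f)\ge 2^{\lfloor\log_2(n-1)\rfloor}$.
   Context: $\mathbf{SB}_n$ is the set of symmetric Boolean functions on $n$ variables; $\deg$ is the algebraic degree. The algebraic immunity is $\mathcal{AI}(f)=\min\{\deg(g): g\neq0,\ gf=0 \text{ or } g(f+1)=0\}$. *)

(* Defs.v *)
From mathcomp Require Import all_boot fingroup perm.
Set Implicit Arguments. Unset Strict Implicit. Unset Printing Implicit Defensive.

Definition bvec (n : nat) := {ffun 'I_n -> bool}.
Definition boolfun (n : nat) := {ffun bvec n -> bool}.

Definition symmetricb n (f : boolfun n) : Prop :=
  forall (s : 'S_n) (x : bvec n), f [ffun i => x (s i)] = f x.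

Definition bvec_le n (x u : bvec n) : bool := [forall i, x i ==> u i].

Definition wt n (u : bvec n) : nat := #|[pred i | u i]|.

(* ANF coefficient of the monomial x^u (Moebius transform over F_2):
   f(x) = XOR_u anf f u * x^u  with  anf f u = XOR_{x <= u} f x. *)
Definition anf n (f : boolfun n) (u : bvec n) : bool :=
  \big[addb/false]_(x : bvec n | bvec_le x u) f x.

(* Algebraic degree: max weight of a monomial in the ANF (0 for f = 0). *)
Definition deg n (f : boolfun n) : nat :=
  \max_(u : bvec n | anf f u) wt u.

Definition annihilates n (g f : boolfun n) : bool := [forall x, ~~ (g x && f x)].

Definition fcompl n (f : boolfun n) : boolfun n := [ffun x => ~~ f x].

(* Algebraic immunity: min deg g over nonzero g with gf = 0 or g(f+1) = 0.
   The index set is always nonempty (g = f+1 or g = f works), so the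
   default value n of the min is never used. *)
Definition AI n (f : boolfun n) : nat :=
  \big[minn/n]_(g : boolfun n |
      (g != [ffun => false]) && (annihilates g f || annihilates g (fcompl f)))
    deg g.

(* Main.v *)
Require Import Defs.
From mathcomp Require Import all_boot fingroup perm.
Set Implicit Arguments. Unset Strict Implicit. Unset Printing Implicit Defensive.

Definition S (k : nat) (F : nat -> nat) : nat := \sum_(i < k.+1) 'C(k, i) * F i.

Lemma S_ext k F1 F2 : (forall i, i <= k -> F1 i = F2 i) -> S k F1 = S k F2.
Proof.
move=> H; apply: eq_bigr => i _; rewrite H //; exact: (ltn_ord i).
Qed.

Lemma S_add k F1 F2 : S k (fun i => F1 i + F2 i) = S k F1 + S k F2.
Proof. rewrite /S -big_split /=; apply: eq_bigr => i _; by rewrite mulnDr. Qed.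

Lemma S_succ k F : S k.+1 F = S k F + S k (fun i => F i.+1).
Proof.
rewrite /S big_ord_recl /= bin0 mul1n.
have -> : \sum_(i < k.+1) 'C(k, i) * F i =
          F 0 + \sum_(i < k) 'C(k, i.+1) * F i.+1.
  by rewrite big_ord_recl /= bin0 mul1n.
rewrite -addnA; congr (_ + _).
rewrite (eq_bigr (fun i : 'I_k.+1 => 'C(k, i.+1) * F i.+1 + 'C(k, i) * F i.+1));
  last by move=> i _; rewrite /bump /= binS mulnDl.
rewrite big_split /=; congr (_ + _).
by rewrite big_ord_recr /= bin_small // mul0n addn0.
Qed.

Lemma S_shift s k F :
  odd (S (k + 2 ^ s) F) = odd (S k (fun i => F (i + 2 ^ s))) (+) odd (S k F).
Proof.
elim: s k F => [|s IH] k F.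
  by rewrite expn0 addn1 S_succ oddD addbC; congr (_ (+) _); congr odd;
     apply: S_ext => i _; rewrite addn1.
rewrite expnS mul2n -addnn addnA IH IH (IH k F) addbA.
rewrite -[X in X (+) odd (S k F)]addbA addbb addbF.
by congr (_ (+) _); congr odd; apply: S_ext => i _; rewrite addnA.
Qed.

Lemma S_periodic s k F :
  (forall i, F (i + 2 ^ s) = F i) -> ~~ odd (S (k + 2 ^ s) F).
Proof.
move=> H; rewrite S_shift; rewrite (S_ext (F2 := F)); first by rewrite addbb.
by move=> i _; rewrite H.
Qed.

Lemma S_one k : S k (fun _ => 1) = 2 ^ k.
Proof.
elim: k => [|k IH]; first by rewrite /S big_ord1.
by rewrite S_succ IH expnS mul2n addnn.
Qed.

Lemma S_tri M F : (forall k, k <= M -> ~~ odd (S k F)) ->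
  forall w, w <= M -> ~~ odd (F w).
Proof.
move=> H; elim/ltn_ind => w IH hw.
have := H w hw; rewrite /S big_ord_recr /= binn mul1n oddD.
rewrite (_ : odd (\sum_(i < w) 'C(w, i) * F i) = false) //.
rewrite (big_morph _ oddD (erefl (odd 0))).
apply: big1 => i _; rewrite oddM.
have -> : odd (F i) = false; last by rewrite andbF.
apply/negbTE; apply: IH => //; exact: leq_trans (ltnW (ltn_ord i)) hw.
Qed.


Lemma wtE n (x : bvec n) : wt x = count x (enum 'I_n).
Proof.
rewrite /wt cardE /enum_mem size_filter /enum_mem count_filter.
by apply: eq_count => i; rewrite /= !inE andbT.
Qed.

Lemma wt_le n (x : bvec n) : wt x <= n.
Proof. by rewrite /wt; apply: leq_trans (max_card _) _; rewrite card_ord. Qed.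

Definition vk n k : bvec n := [ffun i : 'I_n => i < k].

Lemma count_iota_lt k n : k <= n -> count (fun m => m < k) (iota 0 n) = k.
Proof.
move=> hk; rewrite -(subnKC hk) iotaD count_cat add0n.
rewrite (eq_in_count (a2 := predT)); last by move=> m; rewrite mem_iota.
rewrite count_predT size_iota (eq_in_count (a2 := pred0)).
  by rewrite count_pred0 addn0.
by move=> m; rewrite mem_iota => /andP[h _]; rewrite /= ltnNge h.
Qed.

Lemma wt_vk n k : k <= n -> wt (vk n k) = k.
Proof.
move=> hk; rewrite wtE -[RHS](count_iota_lt hk) -val_enum_ord count_map.
by apply: eq_count => i; rewrite /= ffunE.
Qed.

Lemma count_bool (a : pred bool) s :
  count a s = a true * count id s + a false * count negb s.
Proof.
elim: s => [|b s IH]; first by rewrite /= !muln0.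
rewrite /= IH; case: b; case: (a true); case: (a false) => /=;
  rewrite ?add0n ?mul1n ?mul0n ?add0n ?addn0 //; rewrite ?addnA //.
by rewrite (addnC 1).
Qed.

Lemma sym_wt n (f : boolfun n) : symmetricb f ->
  forall x y, wt x = wt y -> f x = f y.
Proof.
move=> hs x y hw.
pose tx := [tuple x i | i < n]; pose ty := [tuple y i | i < n].
have cnt : forall z : bvec n, count id [tuple z i | i < n] = wt z.
  by move=> z; rewrite wtE /= count_map.
have hp : perm_eq tx ty.
  apply/seq.permP => a; rewrite (count_bool a tx) (count_bool a ty).
  have cn : forall z : bvec n, count negb [tuple z i | i < n] = n - wt z.
    move=> z; rewrite -(cnt z).
    have H := count_predC id [tuple z i | i < n]; rewrite size_tuple in H.
    by rewrite -[X in X - _]H addKn.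
  by rewrite !cn !cnt hw.
have [s hs'] := tuple_permP hp.
have -> : x = [ffun i => y (s i)].
  apply/ffunP => i; rewrite ffunE.
  have := congr1 (fun t : seq bool => nth false t i) hs'.
  by rewrite -!tnth_nth !tnth_mktuple.
exact: hs.
Qed.


Lemma card_le_wt n (u : bvec n) j :
  #|[set x : bvec n | bvec_le x u && (wt x == j)]| = 'C(wt u, j).
Proof.
pose phi (x : bvec n) : {set 'I_n} := [set i | x i].
have inj : injective phi.
  move=> x y E; apply/ffunP => i.
  by have := congr1 (fun A : {set 'I_n} => i \in A) E; rewrite !inE.
rewrite -(card_imset _ inj).
have -> : wt u = #|[set i | u i]| by rewrite cardsE.
rewrite -cards_draws; apply: eq_card => A; rewrite !inE.
apply/imsetP/andP.
  move=> [x]; rewrite inE => /andP[hle hw] ->; split.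
    by apply/subsetP => i; rewrite !inE; move/forallP: hle => /(_ i) /implyP.
  by rewrite -(eqP hw) /wt cardsE.
move=> [hsub hc]; exists [ffun i => i \in A].
  rewrite inE; apply/andP; split.
    apply/forallP => i; rewrite ffunE; apply/implyP => hi.
    by have := subsetP hsub i hi; rewrite inE.
  by rewrite -(eqP hc) /wt; apply/eqP; apply: eq_card => i; rewrite inE ffunE.
by apply/setP => i; rewrite !inE ffunE.
Qed.

Lemma anf_sym n (g : boolfun n) (H : nat -> bool) :
  (forall x, g x = H (wt x)) ->
  forall u, anf g u = odd (S (wt u) (fun i => H i)).
Proof.
move=> hg u; rewrite /anf (eq_bigr (fun x => H (wt x))); last by move=> x _.
have -> : \big[addb/false]_(x | bvec_le x u) H (wt x) =
          odd (\sum_(x | bvec_le x u) nat_of_bool (H (wt x))).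
  rewrite (big_morph _ oddD (erefl (odd 0))).
  by apply: eq_bigr => x _; rewrite oddb.
rewrite (partition_big (fun x => (inord (wt x) : 'I_n.+1)) predT) //=.
congr odd.
rewrite /S (big_ord_widen n.+1 (fun j => 'C(wt u, j) * H j)); last first.
  by rewrite ltnS wt_le.
rewrite [RHS]big_mkcond /=; apply: eq_bigr => j _.
rewrite (eq_bigr (fun _ => nat_of_bool (H j))); last first.
  move=> x /andP[_ /eqP <-]; rewrite inordK // ltnS; exact: wt_le.
rewrite (eq_bigl (fun x => bvec_le x u && (wt x == j))); last first.
  move=> x; congr andb; rewrite -val_eqE /= inordK // ltnS; exact: wt_le.
rewrite sum_nat_cond_const card_le_wt.
case: ifP => // /negbT; rewrite -leqNgt => h; by rewrite bin_small.
Qed.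


Lemma bigmin_le_seq (I : eqType) r (P : pred I) F m i0 :
  i0 \in r -> P i0 -> \big[minn/m]_(i <- r | P i) F i <= F i0.
Proof.
elim: r => // a r IH; rewrite inE big_cons => /orP[/eqP <- | h] hP.
  by rewrite hP geq_minl.
case: (P a); last exact: IH.
by rewrite geq_min IH ?orbT.
Qed.

Lemma AI_le n (f g : boolfun n) : g != [ffun => false] ->
  (annihilates g f || annihilates g (fcompl f)) -> AI f <= deg g.
Proof.
move=> h1 h2; rewrite /AI; apply: bigmin_le_seq; first exact: mem_index_enum.
by rewrite h1 h2.
Qed.

Lemma deg_le n (g : boolfun n) (H : nat -> bool) d :
  (forall x, g x = H (wt x)) ->
  (forall k, d < k -> k <= n -> ~~ odd (S k (fun i => H i))) -> deg g <= d.
Proof.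
move=> hg hk; apply/bigmax_leqP => u; rewrite (anf_sym hg) => hu.
rewrite leqNgt; apply/negP => hlt.
by have := hk _ hlt (wt_le u); rewrite hu.
Qed.

Lemma deg_ge n (g : boolfun n) (H : nat -> bool) k :
  (forall x, g x = H (wt x)) -> k <= n ->
  odd (S k (fun i => H i)) -> k <= deg g.
Proof.
move=> hg hk ho; rewrite -{1}(wt_vk hk); apply: leq_bigmax_cond.
by rewrite (anf_sym hg) wt_vk.
Qed.

Lemma caseA n (f : boolfun n) (G : nat -> bool) s r0 b :
  (forall x, f x = G (wt x)) -> r0 < 2 ^ s -> r0 <= n ->
  (forall w, w <= n -> w %% 2 ^ s = r0 -> G w = b) -> AI f <= (2 ^ s).-1.
Proof.
move=> hf hr hrn hb.
pose I w := (w %% 2 ^ s == r0).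
pose g : boolfun n := [ffun x => I (wt x)].
have hg : forall x, g x = I (wt x) by move=> x; rewrite ffunE.
apply: (@leq_trans (deg g)).
  apply: AI_le.
    apply/eqP => E; have := congr1 (fun h : boolfun n => h (vk n r0)) E.
    by rewrite !ffunE wt_vk // /I modn_small // eqxx.
  apply/orP; case: b hb => hb; [right|left]; apply/forallP => x;
    rewrite ?ffunE hf; apply/negP => /andP[/eqP hI];
    by rewrite (hb _ (wt_le x) hI).
apply: (deg_le hg) => k hk kn.
have h2 : 2 ^ s <= k.
  by move: hk; have := expn_gt0 2 s; case: (2 ^ s).
rewrite -(subnK h2); apply: S_periodic => i.
by rewrite /I modnDr.
Qed.

Lemma caseB n (f : boolfun n) (G : nat -> bool) s :
  (forall x, f x = G (wt x)) -> 2 ^ s <= n ->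
  (forall w, w + 2 ^ s <= n -> G (w + 2 ^ s) = ~~ G w) -> AI f <= 2 ^ s.
Proof.
move=> hf hsn hG.
apply: (@leq_trans (deg f)).
  apply: AI_le.
    apply/eqP => E.
    have E1 := congr1 (fun h : boolfun n => h (vk n 0)) E.
    have E2 := congr1 (fun h : boolfun n => h (vk n (2 ^ s))) E.
    move: E1 E2; rewrite !ffunE !hf !wt_vk //.
    by rewrite -{1}(add0n (2 ^ s)) hG ?add0n // => ->.
  by apply/orP; right; apply/forallP => x; rewrite ffunE; case: (f x).
apply: (deg_le hf) => k hk kn.
have h2 : 2 ^ s <= k by exact: ltnW.
rewrite -(subnK h2) S_shift -oddD -S_add.
rewrite (S_ext (F2 := fun _ => 1)).
  rewrite S_one oddX /= orbF -lt0n subn_gt0 //.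
move=> i hi; rewrite hG; first by case: (G i).
by apply: leq_trans kn; rewrite -(subnK h2) leq_add2r.
Qed.


Theorem corollary9 (n : nat) (f : boolfun n) :
  2 <= n -> symmetricb f -> AI f = uphalf n ->
  2 ^ trunc_log 2 (n - 1) <= deg f.
Proof.
move=> n2 hs hAI.
have hn1 : 0 < n - 1 by rewrite subn_gt0.
move: (trunc_logP (isT : 1 < 2) hn1) (trunc_log_ltn (n - 1) (isT : 1 < 2)).
move: (trunc_log 2 (n - 1)) => t ht1 ht2.
rewrite leqNgt; apply/negP => hdeg.
pose G k := f (vk n k).
have hf : forall x, f x = G (wt x).
  by move=> x; apply: (sym_wt hs); rewrite wt_vk ?wt_le.
have hPn : 2 ^ t <= n by apply: leq_trans ht1 (leq_subr 1 n).
have hper : forall w, w + 2 ^ t <= n -> G (w + 2 ^ t) = G w.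
  pose D i := nat_of_bool (G (i + 2 ^ t)) + G i.
  have hD : forall k, k <= n - 2 ^ t -> ~~ odd (S k D).
    move=> k hk; apply/negP => ho.
    have : k + 2 ^ t <= deg f.
      apply: (deg_ge hf); first by rewrite addnC -leq_subRL.
      by rewrite S_shift -oddD -S_add.
    move=> h; have := leq_ltn_trans h hdeg; by rewrite ltnNge leq_addl.
  move=> w hw.
  have := S_tri hD (w := w); rewrite leq_subRL // addnC => /(_ hw).
  by rewrite /D oddD !oddb; case: (G (w + 2 ^ t)); case: (G w).
have hP0 : 0 < 2 ^ t by rewrite expn_gt0.
have hmod : forall w, w <= n -> G w = G (w %% 2 ^ t).
  elim/ltn_ind => w IH hw.
  case: (ltnP w (2 ^ t)) => h; first by rewrite modn_small.
  have e : w = (w - 2 ^ t) + 2 ^ t by rewrite subnK.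
  have h1 : w - 2 ^ t < w by rewrite ltn_subrL hP0 (leq_trans hP0 h).
  have h2 : w - 2 ^ t <= n by apply: leq_trans (ltnW h1) hw.
  rewrite e modnDr hper; [exact: IH | by rewrite -e].
have hup : 0 < uphalf n by rewrite uphalf_gt0 (leq_trans _ n2).
case: t ht1 ht2 hdeg hper hmod hP0 hPn => [|t] ht1 ht2 hdeg hper hmod hP0 hPn.
  have h := caseA (s := 0) (r0 := 0) (b := G 0) hf isT (leq0n n).
  have : uphalf n <= 0.
    by rewrite -hAI; apply: h => w hw _; rewrite hmod // modn1.
  by rewrite leqNgt hup.
have hh : 0 < 2 ^ t by rewrite expn_gt0.
have hlt : 2 ^ t < uphalf n.
  rewrite gtn_uphalf_double -mul2n -expnS.
  by apply: leq_ltn_trans ht1 _; rewrite ltn_subrL /= (leq_trans _ n2).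
have hPE : 2 ^ t.+1 = 2 ^ t + 2 ^ t by rewrite expnS mul2n addnn.
have hht : 2 ^ t <= n by apply: leq_trans hPn; rewrite leq_exp2l.
case: (boolP [exists r : 'I_(2 ^ t), G r == G (r + 2 ^ t)]).
  move/existsP => [r /eqP hr].
  have := caseA (s := t) (r0 := r) (b := G r) hf (ltn_ord r)
    (leq_trans (ltnW (ltn_ord r)) hht).
  rewrite hAI => h.
  have : uphalf n <= (2 ^ t).-1.
    apply: h => w hw hwr.
    rewrite hmod //.
    set m := w %% 2 ^ t.+1.
    have hm1 : m %% 2 ^ t = r.
      by rewrite /m modn_dvdm // expnS dvdn_mull.
    have hm2 : m < 2 ^ t + 2 ^ t by rewrite -hPE ltn_mod expn_gt0.
    rewrite (divn_eq m (2 ^ t)) hm1.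
    have : m %/ 2 ^ t < 2 by rewrite ltn_divLR // mul2n -addnn.
    case: (m %/ 2 ^ t) => [|[|//]] _; first by rewrite mul0n add0n.
    by rewrite mul1n addnC hr.
  by rewrite leqNgt (leq_ltn_trans (leq_pred _) hlt).
rewrite negb_exists => /forallP hno.
have hno' : forall r, r < 2 ^ t -> G (r + 2 ^ t) = ~~ G r.
  move=> r hr; have := hno (Ordinal hr); rewrite /= eq_sym.
  by case: (G r); case: (G (r + 2 ^ t)).
have := caseB (s := t) hf hht.
rewrite hAI => h.
have : uphalf n <= 2 ^ t.
  apply: h => w hw.
  rewrite (hmod w) ?(leq_trans (leq_addr _ _) hw) //.
  rewrite (hmod (w + 2 ^ t)) //.
  rewrite -modnDml.
  set m := w %% 2 ^ t.+1.
  have hm2 : m < 2 ^ t + 2 ^ t by rewrite -hPE ltn_mod expn_gt0.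
  case: (ltnP m (2 ^ t)) => hm.
    rewrite modn_small; first exact: hno'.
    by rewrite hPE ltn_add2r.
  have e : m = (m - 2 ^ t) + 2 ^ t by rewrite subnK.
  have hr : m - 2 ^ t < 2 ^ t by rewrite ltn_subLR.
  rewrite e -addnA -hPE modnDr modn_small; last by apply: leq_trans hr _; rewrite leq_exp2l.
  by rewrite hno' // negbK.
by rewrite leqNgt hlt.
Qed.
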